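(* Let $\alpha,\beta\in\mathbb{R}$ with $\alpha\neq 0$, and let $G_1$ be the connected, simply connected Lie group whose Lie algebra $\mathfrak{g}_1$ has a basis $\{e_1,e_2,e_3\}$ with $[e_1,e_2]=\alpha e_1-\beta e_3$, $[e_1,e_3]=-\alpha e_1-\beta e_2$, $[e_2,e_3]=\beta e_1+\alpha e_2+\alpha e_3$, equipped with the left-invariant Lorentzian metric $g$ for which $\{e_1,e_2,e_3\}$ is pseudo-orthonormal with $e_3$ timelike, and with the product structure $J$. Let $\lambda_0,c\in\mathbb{R}$. Then there exists a derivation $D$ of $\mathfrak{g}_1$ with $\widetilde{\mathrm{Ric}}^1=(s^1\lambda_0+c)\mathrm{Id}+D$ (i.e. $(G_1,g,J)$ is an algebraic Schouten soliton associated to the Kobayashi–Nomizu connection $\nabla^1$) if and only if $\beta=0$ and $c=-\frac12\alpha^2+2\alpha^2\lambda_0$.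
   Context: Pseudo-orthonormal means $g(e_1,e_1)=g(e_2,e_2)=1$, $g(e_3,e_3)=-1$, $g(e_i,e_j)=0$ for $i\neq j$; left-invariant tensors are identified with their values on $\mathfrak{g}$. $\nabla$ is the Levi-Civita connection of $g$. The product structure $J$ is the left-invariant endomorphism with $Je_1=e_1$, $Je_2=e_2$, $Je_3=-e_3$. The canonical connection is $\nabla^0_XY=\nabla_XY-\frac12(\nabla_XJ)JY$, and the Kobayashi–Nomizu connection is $\nabla^1_XY=\nabla^0_XY-\frac14[(\nabla_YJ)JX-(\nabla_{JY}J)X]$. For $k=0,1$: $R^k(X,Y)Z=\nabla^k_X\nabla^k_YZ-\nabla^k_Y\nabla^k_XZ-\nabla^k_{[X,Y]}Z$; $\rho^k(X,Y)=-g(R^k(X,e_1)Y,e_1)-g(R^k(X,e_2)Y,e_2)+g(R^k(X,e_3)Y,e_3)$; $\widetilde\rho^k(X,Y)=\frac12(\rho^k(X,Y)+\rho^k(Y,X))$; $\widetilde{\mathrm{Ric}}^k$ is defined by $\widetilde\rho^k(X,Y)=g(\widetilde{\mathrm{Ric}}^k(X),Y)$; and $s^k=\widetilde\rho^k(e_1,e_1)+\widetilde\rho^k(e_2,e_2)-\widetilde\rho^k(e_3,e_3)$. A derivation of $\mathfrak{g}$ is a linear map $D$ with $D[X,Y]=[DX,Y]+[X,DY]$. $(G,g,J)$ is an algebraic Schouten soliton associated to $\nabla^k$ (with real constants $\lambda_0,c$) if $\widetilde{\mathrm{Ric}}^k=(s^k\lambda_0+c)\mathrm{Id}+D$ for some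 derivation $D$. *)

(* Defs.v *)
(* Left-invariant objects on G_1 are identified with their
   values on the Lie algebra g_1 = R^3 (row vectors, coordinates in the basis
   e1,e2,e3). Endomorphisms act on row vectors by right multiplication. *)
From HB Require Import structures.
From mathcomp Require Import all_boot all_order all_algebra.
From mathcomp Require Import reals.
Set Implicit Arguments. Unset Strict Implicit. Unset Printing Implicit Defensive.
Import Order.TTheory GRing.Theory Num.Theory.
Local Open Scope ring_scope.

Section G1.
Variable R : realType.
Variables alpha beta : R.

Definition vec := 'rV[R]_3.
(* basis vectors e_{i+1} *)
Definition e (i : 'I_3) : vec := delta_mx 0 i.
Definition E1 : vec := e (inord 0).
Definition E2 : vec := e (inord 1).
Definition E3 : vec := e (inord 2).

Definition epsg (i : 'I_3) : R := if val i == 2%N then -1 else 1.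
Definition g (u v : vec) : R := \sum_(i < 3) epsg i * u 0 i * v 0 i.

Definition brb (i j : 'I_3) : vec :=
  match (val i, val j) with
  | (0%N, 1%N) => alpha *: E1 - beta *: E3
  | (1%N, 0%N) => - (alpha *: E1 - beta *: E3)
  | (0%N, 2%N) => - alpha *: E1 - beta *: E2
  | (2%N, 0%N) => - (- alpha *: E1 - beta *: E2)
  | (1%N, 2%N) => beta *: E1 + alpha *: E2 + alpha *: E3
  | (2%N, 1%N) => - (beta *: E1 + alpha *: E2 + alpha *: E3)
  | _ => (0 : vec)
  end.

Definition br (u v : vec) : vec :=
  \sum_(i < 3) \sum_(j < 3) (u 0 i * v 0 j) *: brb i j.

(* Levi-Civita connection on left-invariant fields (Koszul formula):
   2 g(nab X Y, Z) = g([X,Y],Z) - g([Y,Z],X) + g([Z,X],Y). *)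
Definition nab (X Y : vec) : vec :=
  \sum_(k < 3) (epsg k * ((g (br X Y) (e k) - g (br Y (e k)) X
                          + g (br (e k) X) Y) / 2)) *: e k.

Definition Jb (i : 'I_3) : vec := if val i == 2%N then - e i else e i.
Definition Jm (u : vec) : vec := \sum_(i < 3) u 0 i *: Jb i.

Definition nablaJ (X Y : vec) : vec := nab X (Jm Y) - Jm (nab X Y).

Definition nab0 (X Y : vec) : vec := nab X Y - (1/2) *: nablaJ X (Jm Y).
Definition nab1 (X Y : vec) : vec :=
  nab0 X Y - (1/4) *: (nablaJ Y (Jm X) - nablaJ (Jm Y) X).

Definition Curv (nb : vec -> vec -> vec) (X Y Z : vec) : vec :=
  nb X (nb Y Z) - nb Y (nb X Z) - nb (br X Y) Z.
Definition rho (nb : vec -> vec -> vec) (X Y : vec) : R :=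
  - g (Curv nb X E1 Y) E1 - g (Curv nb X E2 Y) E2 + g (Curv nb X E3 Y) E3.
Definition rhot (nb : vec -> vec -> vec) (X Y : vec) : R :=
  (rho nb X Y + rho nb Y X) / 2.
(* the endomorphism with rhot(X,Y) = g(Ric X, Y) *)
Definition Ric (nb : vec -> vec -> vec) (X : vec) : vec :=
  \sum_(k < 3) (epsg k * rhot nb X (e k)) *: e k.
Definition scal (nb : vec -> vec -> vec) : R :=
  rhot nb E1 E1 + rhot nb E2 E2 - rhot nb E3 E3.

Definition is_derivation (D : 'M[R]_3) : Prop :=
  forall u v : vec, br u v *m D = br (u *m D) v + br u (v *m D).

Definition alg_schouten_soliton (nb : vec -> vec -> vec) (lambda0 c : R) : Prop :=
  exists D : 'M[R]_3, is_derivation D /\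
    forall X : vec, Ric nb X = (scal nb * lambda0 + c) *: X + X *m D.

End G1.

(* Main.v *)
Require Import Defs.
From HB Require Import structures.
From mathcomp Require Import all_boot all_order all_algebra.
From mathcomp Require Import reals ring.
Import Order.TTheory GRing.Theory Num.Theory.
Local Open Scope ring_scope.

Section S.
Variable R : realType.
Variables alpha beta : R.

Definition mk (x y z : R) : vec R :=
  \row_(i < 3) (if val i == 0%N then x else if val i == 1%N then y else z).

Lemma mk_eta (u : vec R) : u = mk (u 0 0) (u 0 (lift 0 0)) (u 0 (lift 0 (lift 0 0))).
Proof.
apply/rowP => i; rewrite !mxE; case: i => [[|[|[|//]]] Hi] /=;
rewrite ?ord1; congr (u _ _); exact: val_inj.
Qed.

Lemma mkD x y z x' y' z' : mk x y z + mk x' y' z' = mk (x + x') (y + y') (z + z').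
Proof. by apply/rowP => i; rewrite !mxE; case: ifP => //; case: ifP. Qed.
Lemma mkN x y z : - mk x y z = mk (- x) (- y) (- z).
Proof. by apply/rowP => i; rewrite !mxE; case: ifP => //; case: ifP. Qed.
Lemma mkZ a x y z : a *: mk x y z = mk (a * x) (a * y) (a * z).
Proof. by apply/rowP => i; rewrite !mxE; case: ifP => //; case: ifP. Qed.
Lemma mkB x y z x' y' z' : mk x y z - mk x' y' z' = mk (x - x') (y - y') (z - z').
Proof. by rewrite mkN mkD. Qed.
Lemma mk0 : (0 : vec R) = mk 0 0 0.
Proof. by apply/rowP => i; rewrite !mxE; case: ifP => //; case: ifP. Qed.

Ltac mks := rewrite ?scaler0 ?addr0 ?add0r; rewrite ?(mkZ, mkN, mkD).

Lemma mk_inj x y z x' y' z' : mk x y z = mk x' y' z' -> [/\ x = x', y = y' & z = z'].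
Proof.
move=> H; split.
- by move/rowP: H => /(_ 0); rewrite !mxE.
- by move/rowP: H => /(_ (lift 0 0)); rewrite !mxE.
- by move/rowP: H => /(_ (lift 0 (lift 0 0))); rewrite !mxE.
Qed.

Lemma e_mk i : e R i = mk (if val i == 0%N then 1 else 0) (if val i == 1%N then 1 else 0)
   (if val i == 2%N then 1 else 0).
Proof.
apply/rowP => j; rewrite !mxE /= ; case: i => [[|[|[|//]]] Hi]; case: j => [[|[|[|//]]] Hj] //=.
Qed.

Lemma E1_mk : E1 R = mk 1 0 0.
Proof. by rewrite /E1 e_mk /= inordK. Qed.
Lemma E2_mk : E2 R = mk 0 1 0.
Proof. by rewrite /E2 e_mk /= inordK. Qed.
Lemma E3_mk : E3 R = mk 0 0 1.
Proof. by rewrite /E3 e_mk /= inordK. Qed.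

Lemma g_mk x1 y1 z1 x2 y2 z2 : g (mk x1 y1 z1) (mk x2 y2 z2) = x1 * x2 + y1 * y2 - z1 * z2.
Proof. rewrite /g !big_ord_recl big_ord0 /= !mxE /= /epsg /=. ring. Qed.

Lemma Jm_mk x y z : Jm (mk x y z) = mk x y (- z).
Proof.
rewrite /Jm !big_ord_recl big_ord0 /= /Jb /= !e_mk /= !mxE /= !mkN !mkZ addr0 !mkD.
congr mk; ring.
Qed.

Lemma br_mk x1 y1 z1 x2 y2 z2 : br alpha beta (mk x1 y1 z1) (mk x2 y2 z2) =
 mk (-(beta*z1*y2) + beta*y1*z2 + alpha*z1*x2 + -(alpha*y1*x2) + -(alpha*x1*z2) + alpha*x1*y2) (beta*z1*x2 + -(beta*x1*z2) + -(alpha*z1*y2) + alpha*y1*z2) (beta*y1*x2 + -(beta*x1*y2) + -(alpha*z1*y2) + alpha*y1*z2).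
Proof.
rewrite /br !big_ord_recl !big_ord0 /= /brb /= !mxE /= E1_mk E2_mk E3_mk.
mks.
congr mk; ring.
Qed.

Lemma nab_mk x1 y1 z1 x2 y2 z2 : nab alpha beta (mk x1 y1 z1) (mk x2 y2 z2) =
 mk (-((1/2)*beta*z1*y2) + (1/2)*beta*y1*z2 + -(alpha*x1*z2) + alpha*x1*y2) ((1/2)*beta*z1*x2 + -((1/2)*beta*x1*z2) + -(alpha*z1*z2) + alpha*y1*z2 + -(alpha*x1*x2)) ((1/2)*beta*y1*x2 + -((1/2)*beta*x1*y2) + -(alpha*z1*y2) + alpha*y1*y2 + -(alpha*x1*x2)).
Proof.
rewrite /nab !big_ord_recl !big_ord0 /= !e_mk /= /epsg /= !br_mk !g_mk.
mks. by congr mk; field.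
Qed.

Lemma nab1_mk x1 y1 z1 x2 y2 z2 : nab1 alpha beta (mk x1 y1 z1) (mk x2 y2 z2) =
 mk (-(beta*z1*y2) + alpha*z1*x2 + alpha*x1*y2) (beta*z1*x2 + -(alpha*z1*y2) + -(alpha*x1*x2)) (alpha*y1*z2).
Proof.
rewrite /nab1 /nab0 /nablaJ !Jm_mk !nab_mk ?Jm_mk ?nab_mk.
mks. by congr mk; field.
Qed.

Lemma Ric_mk x y z : Ric alpha beta (nab1 alpha beta) (mk x y z) =
 mk (-(beta*beta*x) + -((1/2)*alpha*beta*z) + alpha*beta*y + -(alpha*alpha*x)) (-(beta*beta*y) + alpha*beta*x + (1/2)*alpha*alpha*z + -(alpha*alpha*y)) ((1/2)*alpha*beta*x + -((1/2)*alpha*alpha*y)).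
Proof.
rewrite /Ric /rhot /rho /Curv !big_ord_recl !big_ord0 /= !e_mk /= /epsg /= E1_mk E2_mk E3_mk.
rewrite !br_mk !nab1_mk; mks; rewrite !g_mk; mks.
by congr mk; field.
Qed.

Lemma scal_val : scal alpha beta (nab1 alpha beta) = -(2*beta*beta) + -(2*alpha*alpha).
Proof.
rewrite /scal /rhot /rho /Curv E1_mk E2_mk E3_mk.
rewrite !br_mk !nab1_mk; mks; rewrite !g_mk.
by field.
Qed.

Lemma mk_mul x y z (M : 'M[R]_3) : mk x y z *m M =
  mk (x * M 0 0 + y * M (lift 0 0) 0 + z * M (lift 0 (lift 0 0)) 0)
     (x * M 0 (lift 0 0) + y * M (lift 0 0) (lift 0 0) + z * M (lift 0 (lift 0 0)) (lift 0 0))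
     (x * M 0 (lift 0 (lift 0 0)) + y * M (lift 0 0) (lift 0 (lift 0 0)) + z * M (lift 0 (lift 0 0)) (lift 0 (lift 0 0))).
Proof.
apply/rowP => j; rewrite !mxE !big_ord_recl big_ord0 !mxE /= addr0 addrA.
case: j => [[|[|[|//]]] Hj] /=; congr (_ * M _ _ + _ * M _ _ + _ * M _ _); exact: val_inj.
Qed.

Lemma lemz (A B P q : R) : A = B -> P = q * (A - B) -> P = 0.
Proof. by move=> -> ->; rewrite subrr mulr0. Qed.
End S.

Arguments mk_inj {R x y z x' y' z'}.
Arguments lemz {R A B P} q.

Ltac mks' := rewrite ?scaler0 ?addr0 ?add0r; rewrite ?(mkZ, mkN, mkD).

Theorem theorem4p3 (R : realType) (alpha beta lambda0 c : R) (halpha : alpha != 0) :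
  alg_schouten_soliton alpha beta (nab1 alpha beta) lambda0 c <->
  (beta = 0 /\ c = - (1/2) * alpha ^+ 2 + 2 * alpha ^+ 2 * lambda0).
Proof.
split.
- case=> D [HD HR].
  set k := scal alpha beta (nab1 alpha beta) * lambda0 + c in HR.
  have XD : forall X, X *m D = Ric alpha beta (nab1 alpha beta) X - k *: X.
    by move=> X; rewrite HR addrC addKr.
  have := HD (mk R 1 0 0) (mk R 0 1 0).
  rewrite !XD br_mk !Ric_mk; mks'; rewrite !br_mk; mks' => Heq; have [H1 H2 H3] := mk_inj Heq.
  have Hb : alpha * alpha * beta = 0.
    by apply: (lemz 2 H2); field.
  have Hb0 : beta = 0.
    by move/eqP: Hb; rewrite !mulf_eq0 (negbTE halpha) /= => /eqP.
  subst beta.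
  have Hk : alpha * (k + alpha * alpha / 2) = 0.
    by apply: (lemz 1 H1); field.
  have Hk0 : k + alpha * alpha / 2 = 0.
    by move/eqP: Hk; rewrite mulf_eq0 (negbTE halpha) /= => /eqP.
  split=> //.
  move: Hk0; rewrite /k scal_val => Hk0.
  apply/eqP; rewrite -subr_eq0; apply/eqP; rewrite -Hk0; by field.
- case=> -> ->.
  pose h := alpha ^+ 2 / 2.
  exists (\matrix_(i < 3, j < 3) match (val i, val j) with
     | (0%N, 0%N) => - h | (1%N, 1%N) => - h | (1%N, 2%N) => - h
     | (2%N, 1%N) => h | (2%N, 2%N) => h | _ => 0 end).
  split.
  + move=> u v; rewrite (mk_eta _ u) (mk_eta _ v) !br_mk !mk_mul !mxE /= !br_mk; mks'.
    rewrite /h; by congr mk; field.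
  + move=> X; rewrite (mk_eta _ X) Ric_mk scal_val !mk_mul !mxE /=; mks'.
    rewrite /h; by congr mk; field.
Qed.
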